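(* Let $M,N>0$. Define $a^{(m)}=a^{(m)}(M,N)$ by $a^{(0)}=M$ and, for $m\ge1$, $$a^{(m)}=N\sum_{\substack{0\le p_1,p_2,p_3<m\\ \sum p_i=m}}\binom{m}{p_1,p_2,p_3}\prod_{i=1}^3a^{(p_i)}+Nm\sum_{\substack{q_1,\dots,q_4\ge0\\ \sum q_i=m-1}}\binom{m-1}{q_1,\dots,q_4}\prod_{i=1}^4a^{(q_i)}+\frac{N}{m+1}\sum_{\substack{0\le r_1,\dots,r_6<m\\ \sum r_i=m+1}}\binom{m+1}{r_1,\dots,r_6}\prod_{i=1}^6a^{(r_i)}.$$ Then $\sum_{m=0}^\infty a^{(m)}t^m/m!$ converges in a neighborhood of $t=0$, and its sum is, in a neighborhood of $a=M$, the inverse function of $$t(a)=\frac{(a-M)\left(p(a)+\sqrt{p(a)^2-4N^2\left(a^4+15M^{12}N^2\right)\left(a^4+2a^3M+3a^2M^2+4aM^3+5M^4\right)}\right)}{2\left(a^4N+15M^{12}N^3\right)},$$ where $p(a)=1-(a-M)(a+2M)N+30M^8N^2$. *)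

(* Defs.v *)
From Stdlib Require Import Reals List Arith.
From Coquelicot Require Import Coquelicot.
Import ListNotations.
Open Scope R_scope.

Fixpoint comps (k m : nat) : list (list nat) :=
  match k with
  | O => if Nat.eqb m 0 then [[]] else []
  | S k' => flat_map (fun i => map (cons i) (comps k' (m - i))) (List.seq 0 (S m))
  end.

Definition lsum {A} (f : A -> R) (l : list A) : R :=
  fold_right (fun x s => f x + s) 0 l.

Definition lprod (f : nat -> R) (l : list nat) : R :=
  fold_right (fun x s => f x * s) 1 l.

Definition multinom (n : nat) (l : list nat) : R :=
  INR (fact n) / lprod (fun p => INR (fact p)) l.

Definition all_lt (m : nat) (l : list nat) : bool := forallb (fun p => Nat.ltb p m) l.

Definition step (N : R) (f : nat -> R) (m : nat) : R :=
  N * lsum (fun l => multinom m l * lprod f l) (filter (all_lt m) (comps 3 m))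
  + N * INR m * lsum (fun l => multinom (m - 1) l * lprod f l) (comps 4 (m - 1))
  + N / INR (m + 1) *
      lsum (fun l => multinom (m + 1) l * lprod f l) (filter (all_lt m) (comps 6 (m + 1))).

Fixpoint aupto (M N : R) (n : nat) : list R :=
  match n with
  | O => [M]
  | S n' => let l := aupto M N n' in l ++ [step N (fun i => nth i l 0) (S n')]
  end.

Definition aseq (M N : R) (m : nat) : R := nth m (aupto M N m) 0.

Definition acoef (M N : R) (m : nat) : R := aseq M N m / INR (fact m).

Definition pfun (M N a : R) : R := 1 - (a - M) * (a + 2 * M) * N + 30 * M ^ 8 * N ^ 2.

Definition tfun (M N a : R) : R :=
  (a - M) * (pfun M N a +
     sqrt (pfun M N a ^ 2 - 4 * N ^ 2 * (a ^ 4 + 15 * M ^ 12 * N ^ 2)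
            * (a ^ 4 + 2 * a ^ 3 * M + 3 * a ^ 2 * M ^ 2 + 4 * a * M ^ 3 + 5 * M ^ 4)))
  / (2 * (a ^ 4 * N + 15 * M ^ 12 * N ^ 3)).

Goal comps 2 2 = [[0;2];[1;1];[2;0]]%nat. reflexivity. Qed.

(* Main.v *)
Require Import Defs.
From Stdlib Require Import Reals.
From Coquelicot Require Import Coquelicot.
From Stdlib Require Import Lra Lia List Arith.
Import ListNotations.
Open Scope R_scope.

Definition e0 : nat -> R := fun n => match n with O => 1 | _ => 0 end.
Fixpoint pw (f : nat -> R) (k : nat) : nat -> R :=
  match k with O => e0 | S k => PS_mult f (pw f k) end.
Definition tr (m : nat) (f : nat -> R) : nat -> R := fun j => if Nat.ltb j m then f j else 0.

Lemma lsum_nil {A} (f : A -> R) : lsum f [] = 0.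
Proof. reflexivity. Qed.
Lemma lsum_cons {A} (f : A -> R) x l : lsum f (x :: l) = f x + lsum f l.
Proof. reflexivity. Qed.
Lemma lsum_app {A} (f : A -> R) l1 l2 : lsum f (l1 ++ l2) = lsum f l1 + lsum f l2.
Proof. induction l1; simpl. ring. unfold lsum in *. simpl. rewrite IHl1. ring. Qed.
Lemma lsum_flat_map {A B} (f : B -> R) (g : A -> list B) l :
  lsum f (flat_map g l) = lsum (fun x => lsum f (g x)) l.
Proof. induction l. reflexivity. cbn [flat_map]. rewrite lsum_app, IHl, lsum_cons. reflexivity. Qed.
Lemma lsum_map {A B} (f : B -> R) (g : A -> B) l : lsum f (map g l) = lsum (fun x => f (g x)) l.
Proof. induction l. reflexivity. cbn [map]. rewrite !lsum_cons, IHl. reflexivity. Qed.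
Lemma lsum_scal {A} (f : A -> R) c l : lsum (fun x => c * f x) l = c * lsum f l.
Proof. induction l. unfold lsum; simpl; ring. rewrite !lsum_cons, IHl. ring. Qed.
Lemma lsum_ext {A} (f g : A -> R) l : (forall x, In x l -> f x = g x) -> lsum f l = lsum g l.
Proof. induction l; intros H. reflexivity. rewrite !lsum_cons, IHl, H; simpl; auto. intros; apply H; simpl; auto. Qed.
Lemma lsum_seq (F : nat -> R) n : lsum F (List.seq 0 (S n)) = sum_f_R0 F n.
Proof. induction n. simpl. unfold lsum; simpl; ring.
  rewrite seq_S, lsum_app, IHn. simpl. unfold lsum; simpl. ring. Qed.

Lemma comps_pw g k n : lsum (lprod g) (comps k n) = pw g k n.
Proof.
  revert n; induction k; intros n.
  - simpl. destruct n; simpl; unfold lsum, lprod; simpl; ring.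
  - cbn [comps pw]. rewrite lsum_flat_map. unfold PS_mult. rewrite <- lsum_seq.
    apply lsum_ext. intros i Hi. rewrite lsum_map.
    rewrite <- IHk. rewrite <- lsum_scal. reflexivity.
Qed.

Lemma lsum_filter_tr g m L :
  lsum (lprod g) (filter (all_lt m) L) = lsum (lprod (tr m g)) L.
Proof.
  induction L as [|l L IH]. reflexivity.
  cbn [filter]. rewrite lsum_cons. destruct (all_lt m l) eqn:E.
  - rewrite lsum_cons, IH. f_equal. clear IH. unfold all_lt in E.
    induction l; simpl in *. reflexivity. apply andb_prop in E as [E1 E2].
    unfold lprod in *; simpl. rewrite IHl by auto. unfold tr. rewrite E1. reflexivity.
  - rewrite IH. enough (lprod (tr m g) l = 0) by lra. clear IH. unfold all_lt in E.
    induction l; simpl in *. discriminate. apply Bool.andb_false_iff in E as [E|E].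
    unfold lprod; simpl. unfold tr at 1. rewrite E. ring.
    unfold lprod in *; simpl. rewrite IHl by auto. ring.
Qed.

Lemma INR_fact_neq0 n : INR (fact n) <> 0.
Proof. apply not_0_INR. apply fact_neq_0. Qed.

Lemma lprod_div f l : lprod (fun p => f p / INR (fact p)) l = lprod f l / lprod (fun p => INR (fact p)) l.
Proof. induction l; unfold lprod in *; simpl. field. rewrite IHl. field. split.
  - clear IHl. induction l; simpl. lra. apply Rmult_integral_contrapositive. split; auto. apply INR_fact_neq0.
  - apply INR_fact_neq0. Qed.

Lemma lprod_fact_neq0 l : lprod (fun p => INR (fact p)) l <> 0.
Proof. induction l; unfold lprod in *; simpl. lra. apply Rmult_integral_contrapositive. split; auto. apply INR_fact_neq0. Qed.

Lemma multinom_lprod n l f :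
  multinom n l * lprod f l = INR (fact n) * lprod (fun p => f p / INR (fact p)) l.
Proof. unfold multinom. rewrite lprod_div. field. apply lprod_fact_neq0. Qed.

Lemma lsum_multinom n f L :
  lsum (fun l => multinom n l * lprod f l) L = INR (fact n) * lsum (lprod (fun p => f p / INR (fact p))) L.
Proof. rewrite <- lsum_scal. apply lsum_ext. intros. apply multinom_lprod. Qed.

Lemma step_pw N f m :
  let g := fun p => f p / INR (fact p) in
  step N f m = N * (INR (fact m) * pw (tr m g) 3 m) + N * INR m * (INR (fact (m-1)) * pw g 4 (m-1))
   + N / INR (m+1) * (INR (fact (m+1)) * pw (tr m g) 6 (m+1)).
Proof. intros g. unfold step. rewrite !lsum_multinom. rewrite !lsum_filter_tr, !comps_pw. reflexivity. Qed.


Lemma aupto_len M N n : length (aupto M N n) = S n.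
Proof. induction n; simpl; auto. rewrite length_app, IHn. simpl. lia. Qed.

Lemma aupto_nth M N n i : (i <= n)%nat -> nth i (aupto M N n) 0 = aseq M N i.
Proof.
  induction n; intros H.
  - assert (i = 0%nat) by lia. subst. reflexivity.
  - destruct (Nat.eq_dec i (S n)). subst. reflexivity.
    simpl. rewrite app_nth1. apply IHn; lia. rewrite aupto_len. lia.
Qed.

Lemma aseq_S M N n : aseq M N (S n) = step N (fun i => nth i (aupto M N n) 0) (S n).
Proof. unfold aseq at 1. simpl. rewrite app_nth2; rewrite aupto_len. rewrite Nat.sub_diag. reflexivity. lia. Qed.

Lemma PS_mult_local (a a' b b' : nat -> R) n :
  (forall j, (j <= n)%nat -> a j = a' j) -> (forall j, (j <= n)%nat -> b j = b' j) ->
  PS_mult a b n = PS_mult a' b' n.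
Proof. intros Ha Hb. unfold PS_mult. apply sum_eq. intros i Hi. rewrite Ha, Hb by lia. reflexivity. Qed.

Lemma pw_local f g n : (forall j, (j <= n)%nat -> f j = g j) ->
  forall k j, (j <= n)%nat -> pw f k j = pw g k j.
Proof. intros H k; induction k; intros j Hj. reflexivity.
  simpl. apply PS_mult_local; intros; [apply H | apply IHk]; lia. Qed.

Lemma pw_ext f g : (forall j, f j = g j) -> forall k j, pw f k j = pw g k j.
Proof. intros H k j. apply (pw_local f g j); auto. Qed.

Lemma acoef_rec M N n :
  let c := acoef M N in
  c (S n) = N * pw (tr (S n) c) 3 (S n) + N * pw (tr (S n) c) 4 n + N * pw (tr (S n) c) 6 (S (S n)).
Proof.
  intros c. unfold c at 1, acoef. rewrite aseq_S, step_pw.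
  set (g := fun p => nth p (aupto M N n) 0 / INR (fact p)).
  assert (Hg : forall j, (j <= n)%nat -> g j = c j).
  { intros j Hj. unfold g, c, acoef. rewrite aupto_nth by lia. reflexivity. }
  assert (Ht : forall j, tr (S n) g j = tr (S n) c j).
  { intros j. unfold tr. destruct (Nat.ltb_spec j (S n)); auto. apply Hg; lia. }
  rewrite !(pw_ext _ _ Ht).
  replace (S n - 1)%nat with n by lia.
  rewrite (pw_local g (tr (S n) c) n).
  2:{ intros j Hj. rewrite Hg by lia. unfold tr. destruct (Nat.ltb_spec j (S n)); auto; lia. }
  2: lia.
  replace (S n + 1)%nat with (S (S n)) by lia.
  rewrite !fact_simpl. rewrite !mult_INR.
  rewrite !S_INR. pose proof (INR_fact_neq0 n). pose proof (pos_INR n).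
  field. repeat split; lra.
Qed.


Definition Good (rho : R) (f : nat -> R) := Rbar_le (Finite rho) (CV_radius f).

Lemma Series_zero (a : nat -> R) : (forall n, a n = 0) -> Series a = 0.
Proof. intros H. rewrite (Series_ext a (fun n => 0 * a n)). rewrite Series_scal_l. ring.
  intros; rewrite H; ring. Qed.

Lemma ex_series_zero (a : nat -> R) : (forall n, a n = 0) -> ex_series a.
Proof. intros H. exists 0. apply is_series_Reals. intros eps He. exists 0%nat. intros n _.
  rewrite (sum_eq _ (fun _ => 0)). rewrite sum_cte. unfold R_dist. rewrite Rmult_0_l, Rminus_0_r, Rabs_R0. lra.
  intros; apply H. Qed.

Lemma ex_series_fin (a : nat -> R) L : (forall n, (L <= n)%nat -> a n = 0) -> ex_series a.
Proof. intros H. apply (ex_series_incr_n a L). apply ex_series_zero. intros; apply H; lia. Qed.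

Lemma Series_fin (a : nat -> R) L : (0 < L)%nat -> (forall n, (L <= n)%nat -> a n = 0) ->
  Series a = sum_f_R0 a (pred L).
Proof. intros HL H. rewrite (Series_incr_n a L HL). rewrite Series_zero. ring.
  intros; apply H; lia. apply (ex_series_fin a L H). Qed.

Lemma ex_series_rad f x : ex_series (fun n => f n * x ^ n) -> Rbar_le (Finite (Rabs x)) (CV_radius f).
Proof.
  intros H. apply ex_series_lim_0 in H.
  destruct (filterlim_bounded (fun n => f n * x ^ n)) as [B HB].
  { exists 0. exact H. }
  destruct (CV_radius_bounded f) as [Hub _]. apply Hub.
  exists B. intros n. rewrite RPow_abs. rewrite Rabs_mult, Rabs_Rabsolu, <- Rabs_mult. apply HB.
Qed.

Lemma good_of_ex rho f : (forall x, 0 <= x < rho -> ex_series (fun n => f n * x ^ n)) -> Good rho f.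
Proof.
  intros H. unfold Good. destruct (CV_radius f) eqn:E.
  - simpl. destruct (Rle_dec rho r); auto. exfalso.
    assert (H0 := CV_radius_ge_0 f). rewrite E in H0. simpl in H0.
    assert (Hx : 0 <= (r + rho)/2 < rho) by lra.
    specialize (ex_series_rad f _ (H _ Hx)). rewrite E. simpl. rewrite Rabs_pos_eq by lra. lra.
  - simpl; auto.
  - assert (H0 := CV_radius_ge_0 f). rewrite E in H0. simpl in H0. contradiction.
Qed.

Lemma good_lt rho f x : Good rho f -> Rabs x < rho -> Rbar_lt (Finite (Rabs x)) (CV_radius f).
Proof. intros H Hx. unfold Good in H. destruct (CV_radius f); simpl in *; auto. lra. Qed.

Lemma good_mult rho a b : Good rho a -> Good rho b -> Good rho (PS_mult a b).
Proof. intros Ha Hb. apply good_of_ex. intros x Hx.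
  apply ex_pseries_R. apply ex_pseries_mult; apply (good_lt rho); auto; rewrite Rabs_pos_eq; lra. Qed.

Lemma good_plus rho a b : Good rho a -> Good rho b -> Good rho (PS_plus a b).
Proof. intros Ha Hb. apply good_of_ex. intros x Hx.
  apply ex_pseries_R. apply ex_pseries_plus; apply CV_radius_inside; apply (good_lt rho); auto; rewrite Rabs_pos_eq; lra. Qed.

Lemma good_fin rho a L : (forall n, (L <= n)%nat -> a n = 0) -> Good rho a.
Proof. intros H. apply good_of_ex. intros x _. apply (ex_series_fin _ L). intros n Hn. rewrite H; auto; ring. Qed.

Lemma PSeries_fin a L x : (0 < L)%nat -> (forall n, (L <= n)%nat -> a n = 0) ->
  PSeries a x = sum_f_R0 (fun n => a n * x ^ n) (pred L).
Proof. intros HL H. unfold PSeries. apply Series_fin; auto. intros n Hn; rewrite H; auto; ring. Qed.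

Inductive ex := V | K (c : R) | Tv | Pl (a b : ex) | Ml (a b : ex).

Definition Kseq (c : R) : nat -> R := fun n => match n with O => c | _ => 0 end.
Definition e1 : nat -> R := fun n => match n with 1%nat => 1 | _ => 0 end.

Fixpoint sden (z : nat -> R) (e : ex) : nat -> R :=
  match e with
  | V => z | K c => Kseq c | Tv => e1
  | Pl a b => PS_plus (sden z a) (sden z b)
  | Ml a b => PS_mult (sden z a) (sden z b)
  end.

Fixpoint rden (Z t : R) (e : ex) : R :=
  match e with
  | V => Z | K c => c | Tv => t
  | Pl a b => rden Z t a + rden Z t b
  | Ml a b => rden Z t a * rden Z t b
  end.

Fixpoint Pw (e : ex) (k : nat) : ex := match k with O => K 1 | S k => Ml e (Pw e k) end.

Lemma sden_Pw z e k : sden z (Pw e k) = pw (sden z e) k.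
Proof. induction k; simpl; auto. rewrite IHk. reflexivity. Qed.

Lemma rden_Pw Z t e k : rden Z t (Pw e k) = rden Z t e ^ k.
Proof. induction k; simpl; auto. rewrite IHk. reflexivity. Qed.

Lemma PSeries_Kseq c x : PSeries (Kseq c) x = c.
Proof. rewrite (PSeries_fin _ 1); auto. simpl. ring. intros [|n] Hn; [lia|reflexivity]. Qed.

Lemma PSeries_e1 x : PSeries e1 x = x.
Proof. rewrite (PSeries_fin _ 2); auto. simpl. ring. intros [|[|n]] Hn; try lia; reflexivity. Qed.

Lemma sden_good rho z e : Good rho z -> Good rho (sden z e).
Proof. intros Hz. induction e; simpl; auto.
  - apply (good_fin _ _ 1). intros [|n] Hn; [lia|reflexivity].
  - apply (good_fin _ _ 2). intros [|[|n]] Hn; try lia; reflexivity.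
  - apply good_plus; auto.
  - apply good_mult; auto. Qed.

Lemma sden_eval rho z e x : Good rho z -> Rabs x < rho ->
  PSeries (sden z e) x = rden (PSeries z x) x e.
Proof. intros Hz Hx. induction e as [| | |a IHa b IHb|a IHa b IHb].
  { reflexivity. }
  { apply PSeries_Kseq. }
  { apply PSeries_e1. }
  { cbn [sden rden]. rewrite PSeries_plus. rewrite IHa, IHb; auto.
    all: apply CV_radius_inside; apply (good_lt rho); auto; apply sden_good; auto. }
  { cbn [sden rden]. rewrite PSeries_mult. rewrite IHa, IHb; auto.
    all: apply (good_lt rho); auto; apply sden_good; auto. }
Qed.


Lemma PS_plus_R (a b : nat -> R) n : PS_plus a b n = a n + b n.
Proof. reflexivity. Qed.

Lemma Kseq_sum c X m n : sum_f_R0 (fun k => Kseq c k * X (m - k)%nat) n = c * X m.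
Proof. induction n. simpl. rewrite Nat.sub_0_r. ring. simpl sum_f_R0. rewrite IHn. simpl. ring. Qed.

Lemma Kseq_mult c X n : PS_mult (Kseq c) X n = c * X n.
Proof. apply Kseq_sum. Qed.

Lemma e1_sum X m n : sum_f_R0 (fun k => e1 k * X (m - k)%nat) n = match n with O => 0 | _ => X (m - 1)%nat end.
Proof. induction n. simpl. ring. simpl sum_f_R0. rewrite IHn. destruct n; simpl; ring. Qed.

Lemma e1_mult_S X n : PS_mult e1 X (S n) = X n.
Proof. unfold PS_mult. rewrite e1_sum. simpl. rewrite Nat.sub_0_r. reflexivity. Qed.

Lemma e1_mult_0 X : PS_mult e1 X 0 = 0.
Proof. unfold PS_mult. rewrite e1_sum. reflexivity. Qed.

Lemma sden_eq rho z e f : 0 < rho -> Good rho z ->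
  (forall Z t, rden Z t e = rden Z t f) -> forall n, sden z e n = sden z f n.
Proof.
  intros Hr Hz H n. apply PSeries_ext_recip.
  { rewrite <- Rabs_R0. apply (good_lt rho). apply sden_good; auto. rewrite Rabs_R0; auto. }
  { rewrite <- Rabs_R0. apply (good_lt rho). apply sden_good; auto. rewrite Rabs_R0; auto. }
  exists (mkposreal rho Hr). intros y Hy.
  assert (Hy' : Rabs y < rho).
  { unfold ball in Hy; simpl in Hy. unfold AbsRing_ball, abs, minus, plus, opp in Hy; simpl in Hy.
    rewrite Ropp_0, Rplus_0_r in Hy. exact Hy. }
  rewrite !(sden_eval rho) by auto. apply H.
Qed.


Lemma sden_local z z' n : (forall j, (j <= n)%nat -> z j = z' j) ->
  forall e j, (j <= n)%nat -> sden z e j = sden z' e j.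
Proof. intros H e. induction e as [| | |a IHa b IHb|a IHa b IHb]; intros j Hj; cbn [sden]; auto.
  { rewrite !PS_plus_R, IHa, IHb; auto. }
  { apply PS_mult_local; intros; [apply IHa|apply IHb]; lia. } Qed.

Fixpoint posx (e : ex) : Prop :=
  match e with V => True | K c => 0 <= c | Tv => True | Pl a b => posx a /\ posx b | Ml a b => posx a /\ posx b end.

Lemma PS_mult_mono (a a' b b' : nat -> R) n :
  (forall j, 0 <= a j <= a' j) -> (forall j, 0 <= b j <= b' j) ->
  0 <= PS_mult a b n <= PS_mult a' b' n.
Proof. intros Ha Hb. unfold PS_mult. split.
  { apply cond_pos_sum. intros k. apply Rmult_le_pos; [apply Ha|apply Hb]. }
  { apply sum_Rle. intros k _. apply Rmult_le_compat; try apply Ha; apply Hb. } Qed.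

Lemma sden_mono z z' e : posx e -> (forall j, 0 <= z j <= z' j) ->
  forall n, 0 <= sden z e n <= sden z' e n.
Proof. intros He Hz. induction e as [| c | |a IHa b IHb|a IHa b IHb]; intros n; cbn [sden]; simpl in He.
  { auto. }
  { destruct n; simpl; lra. }
  { destruct n as [|[|n]]; simpl; lra. }
  { rewrite !PS_plus_R. destruct He. specialize (IHa H n). specialize (IHb H0 n). lra. }
  { destruct He. apply PS_mult_mono; auto. } Qed.

Lemma rden_mono Z Z' t e : posx e -> 0 <= t -> 0 <= Z <= Z' -> 0 <= rden Z t e <= rden Z' t e.
Proof. intros He Ht HZ. induction e as [| c | |a IHa b IHb|a IHa b IHb]; simpl in *; auto; try lra.
  { destruct He. specialize (IHa H). specialize (IHb H0). lra. }
  { destruct He. specialize (IHa H). specialize (IHb H0). split. apply Rmult_le_pos; lra.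
    apply Rmult_le_compat; lra. } Qed.

Lemma rden_cont Z e t0 : continuity_pt (fun t => rden Z t e) t0.
Proof. induction e as [| c | |a IHa b IHb|a IHa b IHb]; simpl.
  { apply continuity_pt_const. intros ? ?; reflexivity. }
  { apply continuity_pt_const. intros ? ?; reflexivity. }
  { apply derivable_continuous_pt. apply derivable_pt_id. }
  { apply (continuity_pt_plus (fun t => rden Z t a) (fun t => rden Z t b)); auto. }
  { apply (continuity_pt_mult (fun t => rden Z t a) (fun t => rden Z t b)); auto. } Qed.

Lemma pw_Kseq a k n : pw (Kseq a) k n = Kseq (a ^ k) n.
Proof. revert n; induction k; intros n. reflexivity.
  simpl pw. rewrite Kseq_mult. rewrite IHk. destruct n; simpl; ring. Qed.


Definition zz M N n := match n with O => 0 | S _ => acoef M N (S n) end.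
Definition y0 (M N : R) := N * M ^ 4.
Definition Yx M N := Pl (K (y0 M N)) V.
Definition Bx M N := Pl (K M) (Ml Tv (Yx M N)).
Definition Ax M N := let Y := Yx M N in
  Pl (Ml (K (3*M)) (Pw Y 2)) (Pl (Ml Tv (Pw Y 3)) (Pl (Ml Y (Pl (K (4*M^3))
   (Pl (Ml (K (6*M^2)) (Ml Tv Y)) (Pl (Ml (K (4*M)) (Ml (Pw Tv 2) (Pw Y 2))) (Ml (Pw Tv 3) (Pw Y 3))))))
   (Pl (Ml (K (20*M^3)) (Pw Y 3)) (Ml Tv (Pl (Ml (K (15*M^2)) (Pw Y 4))
      (Ml Tv (Pl (Ml (K (6*M)) (Pw Y 5)) (Ml Tv (Pw Y 6))))))))).
Definition Psix M N := Pl (Ml Tv (Ml (K N) (Ax M N))) (Ml (K (15*N*M^4)) (Ml V V)).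

Lemma pos_Psix M N : 0 <= M -> 0 <= N -> posx (Psix M N).
Proof. intros HM HN. unfold Psix, Ax, Yx, y0. simpl.
  repeat split; try lra; repeat apply Rmult_le_pos; try lra; try apply pow_le; auto. Qed.

Lemma acoef_0 M N : acoef M N 0 = M.
Proof. unfold acoef, aseq. simpl. field. Qed.

Lemma acoef_1 M N : acoef M N 1 = y0 M N.
Proof. rewrite acoef_rec. 
  assert (H : forall j, tr 1 (acoef M N) j = Kseq M j).
  { intros [|j]. unfold tr. simpl. apply acoef_0. unfold tr. simpl. reflexivity. }
  rewrite !(pw_ext _ _ H). rewrite !pw_Kseq. unfold y0. simpl. ring. Qed.

Lemma tr_S_c M N m : (1 <= m)%nat -> forall j, tr (S m) (acoef M N) j = sden (tr m (zz M N)) (Bx M N) j.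
Proof. intros Hm j. unfold Bx, Yx. cbn [sden]. rewrite PS_plus_R.
  destruct j as [|j].
  { rewrite e1_mult_0. unfold tr. simpl. rewrite acoef_0. ring. }
  rewrite e1_mult_S, PS_plus_R. destruct j as [|j].
  { unfold tr. simpl. destruct (Nat.ltb_spec 1 (S m)); try lia. destruct (0 <? m)%nat; rewrite acoef_1; ring. }
  unfold tr. simpl Kseq. 
  destruct (Nat.ltb_spec (S (S j)) (S m)); destruct (Nat.ltb_spec (S j) m); try lia; simpl; try ring.
Qed.

Definition LHSe M N := let B := Bx M N in
  Ml (K N) (Pl (Ml Tv (Pw B 3)) (Pl (Ml Tv (Ml Tv (Pw B 4))) (Pw B 6))).
Definition RHSe M N := let y := y0 M N in
  Pl (Ml Tv (Ml Tv (Psix M N))) (Pl (K (N*M^6)) (Pl (Ml Tv (K (N*M^3 + 6*N*M^5*y)))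
   (Pl (Ml Tv (Ml Tv (K (3*N*M^2*y + N*M^4 + 15*N*M^4*y^2))))
   (Pl (Ml Tv (Ml (K (6*N*M^5)) V)) (Ml Tv (Ml Tv (Ml (K (3*N*M^2 + 30*N*M^4*y)) V))))))).

Lemma LR_id M N Z t : rden Z t (LHSe M N) = rden Z t (RHSe M N).
Proof. unfold LHSe, RHSe, Psix, Ax, Bx, Yx. simpl. ring. Qed.

Lemma tr_fin m f : forall n, (m <= n)%nat -> tr m f n = 0.
Proof. intros n Hn. unfold tr. destruct (Nat.ltb_spec n m); auto; lia. Qed.

Lemma z_rec M N m : (1 <= m)%nat -> zz M N m = sden (tr m (zz M N)) (Psix M N) m.
Proof.
  intros Hm. set (Z := tr m (zz M N)).
  assert (HG : Good 1 Z) by (apply (good_fin _ _ m); apply tr_fin).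
  assert (E := sden_eq 1 Z _ _ Rlt_0_1 HG (LR_id M N) (S (S m))).
  unfold LHSe, RHSe in E. cbn [sden] in E.
  repeat first [rewrite Kseq_mult in E | rewrite PS_plus_R in E | rewrite e1_mult_S in E].
  assert (HZ1 : Z (S m) = 0) by (apply tr_fin; lia).
  assert (HZ0 : Z m = 0) by (apply tr_fin; lia).
  rewrite HZ1, HZ0 in E.
  destruct m as [|m']; [lia|].
  simpl Kseq in E. rewrite !sden_Pw in E.
  unfold zz at 1. rewrite acoef_rec.
  rewrite !(pw_ext _ _ (tr_S_c M N (S m') Hm)).
  fold Z. lra.
Qed.


Lemma zz_nonneg M N : 0 < M -> 0 < N -> forall n, 0 <= zz M N n.
Proof.
  intros HM HN n. induction n as [n IH] using (well_founded_induction lt_wf).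
  destruct n as [|n']. { simpl; lra. }
  rewrite z_rec by lia.
  apply (sden_mono (tr (S n') (zz M N)) (tr (S n') (zz M N)) _ (pos_Psix M N ltac:(lra) ltac:(lra))).
  intros j. unfold tr. destruct (Nat.ltb_spec j (S n')). { specialize (IH j H). lra. } lra.
Qed.

Lemma tr_nonneg m f : (forall j, 0 <= f j) -> forall j, 0 <= tr m f j.
Proof. intros H j. unfold tr. destruct (j <? m)%nat; auto. lra. Qed.

Lemma yy_eq M N n : acoef M N (S n) = Kseq (y0 M N) n + sden (zz M N) (Psix M N) n.
Proof.
  unfold Psix. cbn [sden]. rewrite PS_plus_R, Kseq_mult.
  destruct n as [|m].
  { rewrite acoef_1, e1_mult_0. unfold PS_mult. simpl. ring. }
  change (acoef M N (S (S m))) with (zz M N (S m)).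
  rewrite z_rec by lia. unfold Psix. cbn [sden]. rewrite PS_plus_R, Kseq_mult, !e1_mult_S.
  simpl Kseq. rewrite Rplus_0_l. f_equal.
  { rewrite !Kseq_mult. f_equal. apply sden_local with (n := m); auto. intros j Hj. unfold tr. destruct (Nat.ltb_spec j (S m)); auto; lia. }
  f_equal. unfold PS_mult. apply sum_eq. intros i Hi.
  destruct i as [|i]. { unfold tr at 1. simpl. ring. }
  destruct (Nat.eq_dec (S i) (S m)) as [E|E].
  { rewrite E, Nat.sub_diag. unfold tr at 2. simpl. ring. }
  unfold tr. destruct (Nat.ltb_spec (S i) (S m)); try lia. destruct (Nat.ltb_spec (S m - S i) (S m)); try lia. reflexivity.
Qed.


Lemma cont_pos f x0 : continuity_pt f x0 -> 0 < f x0 ->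
  exists d, 0 < d /\ forall x, Rabs (x - x0) < d -> 0 < f x.
Proof.
  intros Hc Hp. destruct (Hc (f x0) Hp) as [d [Hd H]]. exists d. split; auto.
  intros x Hx. destruct (Req_dec x x0) as [E|E]. { subst; auto. }
  assert (Hf := H x (conj (conj I (not_eq_sym E)) Hx)). simpl in Hf. unfold R_dist in Hf.
  apply Rabs_def2 in Hf. lra.
Qed.

Lemma partial_le_series a n : (forall j, 0 <= a j) -> ex_series a -> sum_f_R0 a n <= Series a.
Proof.
  intros Ha He. set (a' := fun j => if (j <=? n)%nat then a j else 0).
  assert (E : Series a' = sum_f_R0 a n).
  { rewrite (Series_fin a' (S n)); auto with arith. simpl. apply sum_eq. intros i Hi. unfold a'.
    destruct (Nat.leb_spec i n); auto; lia. intros m Hm. unfold a'. destruct (Nat.leb_spec m n); auto; lia. }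
  rewrite <- E. apply Series_le; auto. intros j. unfold a'. destruct (j <=? n)%nat; split; auto; lra.
Qed.

Lemma ex_series_of_bounded a B : (forall j, 0 <= a j) -> (forall n, sum_f_R0 a n <= B) -> ex_series a.
Proof.
  intros Ha Hb. destruct (ex_finite_lim_seq_incr (sum_n a) B) as [l Hl].
  { intros n. rewrite !sum_n_Reals. simpl. specialize (Ha (S n)). lra. }
  { intros n. rewrite sum_n_Reals. auto. }
  exists l. exact Hl.
Qed.

Lemma majorant M N : 0 < M -> 0 < N -> exists T0, 0 < T0 /\ Good T0 (zz M N).
Proof.
  intros HM HN.
  assert (HM4 : 0 < M ^ 4) by (apply pow_lt; auto).
  set (Zb := / (30 * N * M ^ 4)).
  assert (HZb : 0 < Zb) by (unfold Zb; apply Rinv_0_lt_compat; nra).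
  destruct (cont_pos (fun t => Zb - rden Zb t (Psix M N)) 0) as [d [Hd Hg]].
  { apply continuity_pt_minus. apply continuity_pt_const; intros ? ?; reflexivity. apply rden_cont. }
  { unfold Psix. simpl rden.
    assert (E: 15*N*M^4*(Zb*Zb) = Zb/2) by (unfold Zb; field; repeat split; lra).
    match goal with |- 0 < Zb - (0 * ?X + ?Y) => replace (0 * X + Y) with (Zb/2) by (unfold Zb; field; repeat split; lra) end; lra. }
  set (T0 := d / 2). assert (HT0 : 0 < T0) by (unfold T0; lra).
  assert (Hmaj : rden Zb T0 (Psix M N) <= Zb).
  { assert (H := Hg T0). rewrite Rminus_0_r, Rabs_pos_eq in H by lra. specialize (H ltac:(unfold T0; lra)). lra. }
  assert (Hpos := pos_Psix M N ltac:(lra) ltac:(lra)).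
  assert (Hz := zz_nonneg M N HM HN).
  set (a := fun j => zz M N j * T0 ^ j).
  assert (Ha : forall j, 0 <= a j) by (intros j; unfold a; apply Rmult_le_pos; auto; apply pow_le; lra).
  assert (HPS : forall n, sum_f_R0 a n <= Zb).
  { induction n as [|n IH].
    { unfold a; simpl. lra. }
    set (s := sden (tr (S n) (zz M N)) (Psix M N)).
    assert (Hgood : Good (T0 + 1) (tr (S n) (zz M N))) by (apply (good_fin _ _ (S n)); apply tr_fin).
    assert (Hs : forall j, 0 <= s j).
    { intros j. apply (sden_mono (tr (S n) (zz M N)) (tr (S n) (zz M N)) _ Hpos). intros k. split; [apply tr_nonneg; auto|lra]. }
    apply Rle_trans with (sum_f_R0 (fun j => s j * T0 ^ j) (S n)).
    { apply sum_Rle. intros j Hj. unfold a. apply Rmult_le_compat_r. apply pow_le; lra.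
      destruct j as [|j]. { simpl. apply Hs. }
      rewrite z_rec by lia. apply (sden_mono (tr (S j) (zz M N)) (tr (S n) (zz M N)) _ Hpos).
      intros k. split. apply tr_nonneg; auto. unfold tr.
      destruct (Nat.ltb_spec k (S j)); destruct (Nat.ltb_spec k (S n)); try lia; auto; lra. }
    apply Rle_trans with (PSeries s T0).
    { apply partial_le_series. intros j; apply Rmult_le_pos; auto; apply pow_le; lra.
      apply ex_pseries_R. apply CV_radius_inside. apply (good_lt (T0 + 1)). apply sden_good; auto.
      rewrite Rabs_pos_eq; lra. }
    unfold s. rewrite (sden_eval (T0 + 1)); auto. 2: rewrite Rabs_pos_eq; lra.
    rewrite (PSeries_fin _ (S n)); auto with arith. 2: apply tr_fin.
    simpl pred.
    assert (E : sum_f_R0 (fun j => tr (S n) (zz M N) j * T0 ^ j) n = sum_f_R0 a n).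
    { apply sum_eq. intros i Hi. unfold a, tr. destruct (Nat.ltb_spec i (S n)); auto; lia. }
    rewrite E. apply Rle_trans with (rden Zb T0 (Psix M N)); auto.
    apply rden_mono; auto. lra. split; auto. apply cond_pos_sum; auto. }
  assert (Hex : ex_series a) by (apply (ex_series_of_bounded a Zb); auto).
  exists T0. split; auto. apply good_of_ex. intros x Hx.
  apply (@ex_series_le R_AbsRing R_CompleteNormedModule _ a); auto. intros n. change (norm (zz M N n * x ^ n)) with (Rabs (zz M N n * x ^ n)).
  unfold a. rewrite Rabs_mult, Rabs_pos_eq by auto. rewrite Rabs_pos_eq by (apply pow_le; lra).
  apply Rmult_le_compat_l; auto. apply pow_incr. lra.
Qed.


Lemma psi_fix M N n : sden (zz M N) (Psix M N) n = zz M N n.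
Proof.
  destruct n as [|n].
  { unfold Psix. cbn [sden]. rewrite PS_plus_R, Kseq_mult, e1_mult_0. unfold PS_mult. simpl. ring. }
  assert (H := yy_eq M N (S n)). simpl Kseq in H. change (zz M N (S n)) with (acoef M N (S (S n))). rewrite H. ring.
Qed.

Definition Cx M N := Pl (K M) (Ml Tv (Pl (K (y0 M N)) V)).

Lemma acoef_repr M N n : acoef M N n = sden (zz M N) (Cx M N) n.
Proof.
  unfold Cx. cbn [sden]. rewrite PS_plus_R. destruct n as [|n].
  { rewrite e1_mult_0, acoef_0. simpl. ring. }
  rewrite e1_mult_S, PS_plus_R. destruct n as [|n].
  { rewrite acoef_1. simpl. ring. }
  simpl. ring.
Qed.

Lemma PSeries_ext' a b x : (forall n, a n = b n) -> PSeries a x = PSeries b x.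
Proof. intros H. unfold PSeries. apply Series_ext. intros n; rewrite H; reflexivity. Qed.

Lemma good_ext rho a b : (forall n, a n = b n) -> Good rho a -> Good rho b.
Proof. intros H G. unfold Good. rewrite <- (CV_radius_ext a b H). auto. Qed.

Lemma rden_cont_f (f : R -> R) e t0 : continuity_pt f t0 -> continuity_pt (fun t => rden (f t) t e) t0.
Proof. intros Hf. induction e as [| c | |a IHa b IHb|a IHa b IHb]; simpl.
  { auto. }
  { apply continuity_pt_const. intros ? ?; reflexivity. }
  { apply derivable_continuous_pt. apply derivable_pt_id. }
  { apply (continuity_pt_plus (fun t => rden (f t) t a) (fun t => rden (f t) t b)); auto. }
  { apply (continuity_pt_mult (fun t => rden (f t) t a) (fun t => rden (f t) t b)); auto. } Qed.

Definition Qf (M a : R) := a ^ 4 + 2 * a ^ 3 * M + 3 * a ^ 2 * M ^ 2 + 4 * a * M ^ 3 + 5 * M ^ 4.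

Definition Hx M N :=
  let Y := Pl (K (y0 M N)) V in
  let A := Pl (K M) (Ml Tv Y) in
  let A2 := Ml A A in let A3 := Ml A A2 in let A4 := Ml A A3 in
  Pl (Pl (K (1 + 30 * M ^ 8 * N ^ 2)) (Ml (K (-N)) (Ml (Ml Tv Y) (Pl A (K (2*M))))))
     (Ml (K (-2 * N)) (Ml (Pl A4 (Pl (Ml (K (2*M)) A3) (Pl (Ml (K (3*M^2)) A2) (Pl (Ml (K (4*M^3)) A) (K (5*M^4)))))) Y)).

Lemma Hx_val M N Z t : let Y := y0 M N + Z in let a := M + t * Y in
  rden Z t (Hx M N) = pfun M N a - 2 * N * Qf M a * Y.
Proof. cbv zeta. unfold Hx, pfun, Qf. simpl. ring. Qed.

Lemma quad_id M N Z t : let Y := y0 M N + Z in let a := M + t * Y in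
  y0 M N + rden Z t (Psix M N) - Y =
  (a ^ 4 * N + 15 * M ^ 12 * N ^ 3) - Y * pfun M N a + N * Y ^ 2 * Qf M a.
Proof. cbv zeta. unfold Psix, Ax, Yx, pfun, Qf, y0. simpl. ring. Qed.

Lemma tfun_root M N t Y : 0 < N ->
  let a := M + t * Y in
  (a ^ 4 * N + 15 * M ^ 12 * N ^ 3) - Y * pfun M N a + N * Y ^ 2 * Qf M a = 0 ->
  0 < pfun M N a - 2 * N * Qf M a * Y -> 0 < M ->
  tfun M N a = t.
Proof.
  intros HN a Hq Hh HM. unfold tfun. fold a. fold (Qf M a).
  set (P := pfun M N a) in *. set (Qa := Qf M a) in *.
  set (Da := a ^ 4 * N + 15 * M ^ 12 * N ^ 3) in *.
  assert (HDa : 0 < Da).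
  { unfold Da. assert (0 <= a ^ 4) by (replace (a^4) with ((a*a)*(a*a)) by ring; nra).
    assert (0 < M ^ 12) by (apply pow_lt; auto). assert (0 < N ^ 3) by (apply pow_lt; auto). nra. }
  replace (P ^ 2 - 4 * N ^ 2 * (a ^ 4 + 15 * M ^ 12 * N ^ 2) * Qa) with ((P - 2 * N * Qa * Y) ^ 2)
    by (replace (P ^ 2 - 4 * N ^ 2 * (a ^ 4 + 15 * M ^ 12 * N ^ 2) * Qa) with
         ((P - 2 * N * Qa * Y) ^ 2 - 4 * N * Qa * (Da - Y * P + N * Y ^ 2 * Qa)) by (unfold Da; ring);
        rewrite Hq; ring).
  rewrite sqrt_pow2 by lra.
  replace (2 * (a ^ 4 * N + 15 * M ^ 12 * N ^ 3)) with (2 * Da) by reflexivity.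
  replace (a - M) with (t * Y) by (unfold a; ring).
  assert (HD : Da = Y * (P - N * Qa * Y)) by lra.
  rewrite HD. rewrite HD in HDa. field.
  split; intro E; rewrite E in HDa; lra.
Qed.


Theorem lemma8 (M N : R) (hM : 0 < M) (hN : 0 < N) :
  exists r, 0 < r /\
    (forall t, Rabs t < r -> ex_pseries (acoef M N) t) /\
    exists d, 0 < d /\
      (forall a, Rabs (a - M) < d ->
         Rabs (tfun M N a) < r /\ PSeries (acoef M N) (tfun M N a) = a) /\
      exists e, 0 < e /\
        (forall t, Rabs t < e ->
           Rabs t < r /\ Rabs (PSeries (acoef M N) t - M) < d /\
           tfun M N (PSeries (acoef M N) t) = t).
Proof.
  destruct (majorant M N hM hN) as [T0 [HT0 Gz]].
  set (Zf := PSeries (zz M N)). set (Sf := PSeries (acoef M N)).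
  assert (Hy0 : 0 < y0 M N) by (unfold y0; apply Rmult_lt_0_compat; auto; apply pow_lt; auto).
  assert (HGa : Good T0 (acoef M N)).
  { apply (good_ext _ (sden (zz M N) (Cx M N))). intros n; rewrite acoef_repr; auto. apply sden_good; auto. }
  assert (HS : forall t, Rabs t < T0 -> Sf t = M + t * (y0 M N + Zf t)).
  { intros t Ht. unfold Sf. rewrite (PSeries_ext' _ _ t (acoef_repr M N)). rewrite (sden_eval T0); auto. }
  assert (HZ : forall t, Rabs t < T0 -> rden (Zf t) t (Psix M N) = Zf t).
  { intros t Ht. unfold Zf. rewrite <- (sden_eval T0); auto. apply PSeries_ext'. apply psi_fix. }
  assert (Hquad : forall t, Rabs t < T0 ->
     (M + t * (y0 M N + Zf t)) ^ 4 * N + 15 * M ^ 12 * N ^ 3 - (y0 M N + Zf t) * pfun M N (M + t * (y0 M N + Zf t))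
     + N * (y0 M N + Zf t) ^ 2 * Qf M (M + t * (y0 M N + Zf t)) = 0).
  { intros t Ht. rewrite <- quad_id. rewrite HZ; auto. ring. }
  assert (HT0' : Rabs 0 < T0) by (rewrite Rabs_R0; auto).
  assert (HZc : continuity_pt Zf 0) by (apply PSeries_continuity; apply (good_lt T0); auto).
  assert (HZ0 : Zf 0 = 0) by (unfold Zf; rewrite PSeries_0; reflexivity).
  assert (HSc : forall x, Rabs x < T0 -> continuity_pt Sf x) by (intros x Hx; apply PSeries_continuity; apply (good_lt T0); auto).
  assert (HS0 : Sf 0 = M) by (unfold Sf; rewrite PSeries_0; apply acoef_0).
  destruct (cont_pos (fun t => rden (Zf t) t (Hx M N)) 0) as [d1 [Hd1 H1]].
  { apply rden_cont_f; auto. }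
  { rewrite Hx_val, HZ0. 
    replace (pfun M N (M + 0 * (y0 M N + 0)) - 2 * N * Qf M (M + 0 * (y0 M N + 0)) * (y0 M N + 0)) with 1
      by (unfold pfun, Qf, y0; ring). lra. }
  destruct (cont_pos (fun t => y0 M N + Zf t) 0) as [d2 [Hd2 H2]].
  { apply continuity_pt_plus; auto. apply continuity_pt_const; intros ? ?; reflexivity. }
  { rewrite HZ0; lra. }
  set (e0 := Rmin T0 (Rmin d1 d2)).
  assert (He0 : 0 < e0) by (unfold e0; repeat apply Rmin_pos; auto).
  assert (He0T : e0 <= T0) by apply Rmin_l.
  assert (He01 : e0 <= d1) by (unfold e0; eapply Rle_trans; [apply Rmin_r|apply Rmin_l]).
  assert (He02 : e0 <= d2) by (unfold e0; eapply Rle_trans; [apply Rmin_r|apply Rmin_r]).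
  assert (HY : forall t, Rabs t < e0 -> 0 < y0 M N + Zf t).
  { intros t Ht. apply H2. rewrite Rminus_0_r; lra. }
  assert (Hroot : forall t, Rabs t < e0 -> tfun M N (Sf t) = t).
  { intros t Ht. rewrite HS by lra. apply tfun_root; auto. apply Hquad; lra.
    rewrite <- Hx_val. apply H1. rewrite Rminus_0_r; lra. }
  set (e' := e0 / 2).
  assert (He' : 0 < e') by (unfold e'; lra).
  assert (Habs1 : Rabs e' < e0) by (rewrite Rabs_pos_eq; unfold e'; lra).
  assert (Habs2 : Rabs (- e') < e0) by (rewrite Rabs_Ropp, Rabs_pos_eq; unfold e'; lra).
  assert (Hp : M < Sf e').
  { rewrite HS by lra. specialize (HY e' Habs1). nra. }
  assert (Hm : Sf (- e') < M).
  { rewrite HS by lra. specialize (HY (- e') Habs2). nra. }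
  set (d := Rmin (Sf e' - M) (M - Sf (- e'))).
  assert (Hd : 0 < d) by (unfold d; apply Rmin_pos; lra).
  assert (Hd1' : d <= Sf e' - M) by apply Rmin_l.
  assert (Hd2' : d <= M - Sf (- e')) by apply Rmin_r.
  exists e0. split; auto. split.
  { intros t Ht. apply CV_radius_inside. apply (good_lt T0); auto. lra. }
  exists d. split; auto. split.
  { intros a Ha. apply Rabs_def2 in Ha.
    destruct (Ranalysis5.IVT_interv (fun x => Sf x - a) (- e') e') as [t0 [Ht0 Ht0']].
    { intros x Hx. apply continuity_pt_minus. apply HSc. apply Rabs_def1; unfold e' in *; lra.
      apply continuity_pt_const; intros ? ?; reflexivity. }
    { lra. } { simpl. lra. } { simpl. lra. }
    assert (Hat : Sf t0 = a) by lra.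
    assert (Ht0a : Rabs t0 < e0) by (apply Rabs_def1; unfold e' in *; lra).
    rewrite <- Hat. rewrite Hroot by auto. split; auto. }
  destruct (cont_pos (fun t => d - (Sf t - M)) 0) as [d3 [Hd3 H3]].
  { apply continuity_pt_minus. apply continuity_pt_const; intros ? ?; reflexivity.
    apply continuity_pt_minus. apply HSc; auto. apply continuity_pt_const; intros ? ?; reflexivity. }
  { rewrite HS0. lra. }
  destruct (cont_pos (fun t => d + (Sf t - M)) 0) as [d4 [Hd4 H4]].
  { apply continuity_pt_plus. apply continuity_pt_const; intros ? ?; reflexivity.
    apply continuity_pt_minus. apply HSc; auto. apply continuity_pt_const; intros ? ?; reflexivity. }
  { rewrite HS0. lra. }
  exists (Rmin e0 (Rmin d3 d4)). split. { repeat apply Rmin_pos; auto. }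
  intros t Ht.
  assert (Hte0 : Rabs t < e0) by (eapply Rlt_le_trans; [apply Ht|apply Rmin_l]).
  assert (Ht3 : Rabs (t - 0) < d3) by (rewrite Rminus_0_r; eapply Rlt_le_trans; [apply Ht|]; eapply Rle_trans; [apply Rmin_r|apply Rmin_l]).
  assert (Ht4 : Rabs (t - 0) < d4) by (rewrite Rminus_0_r; eapply Rlt_le_trans; [apply Ht|]; eapply Rle_trans; [apply Rmin_r|apply Rmin_r]).
  specialize (H3 t Ht3). specialize (H4 t Ht4). simpl in H3, H4.
  split; auto. split. { apply Rabs_def1; fold Sf; lra. } apply Hroot; auto.
Qed.
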